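(* Let $\Bbbk$ be an algebraically closed field of characteristic $0$, let $P=\Bbbk[x_1,\dots,x_n]$ be a quadratic Poisson algebra with Poisson enveloping algebra $(U(P),\alpha,\beta)$, and let $\phi$ be a graded Poisson automorphism of $P$. Then there exists a unique graded automorphism $\widetilde\phi$ of $U(P)$ such that $\alpha\circ\phi=\widetilde\phi\circ\alpha$ and $\beta\circ\phi=\widetilde\phi\circ\beta$; it is given by $\widetilde\phi(x_i)=\phi(x_i)$ and $\widetilde\phi(y_i)=\sum_{j=1}^n\frac{\partial\phi(x_i)}{\partial x_j}y_j$.
   Context: $P$ has the standard grading and is quadratic: $\{P_1,P_1\}\subseteq P_2$. $U(P)$ is the $\Bbbk$-algebra generated by $x_1,\dots,x_n,y_1,\dots,y_n$ (all of degree $1$) subject to $[x_i,x_j]=0$, $[y_i,y_j]=\sum_k\frac{\partial\{x_i,x_j\}}{\partial x_k}y_k$, $[y_i,x_j]=\{x_i,x_j\}$; the maps $\alpha,\beta:P\to U(P)$ are $\alpha(f)=f$ and $\beta(f)=\sum_{k=1}^n\frac{\partial f}{\partial x_k}y_k$. A graded Poisson automorphism of $P$ is a degree-preserving bijective map that is an algebra and Lie algebra homomorphism. *)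

(* Defs.v *)
From HB Require Import structures.
From mathcomp Require Import all_boot all_algebra.
From mathcomp Require Import generic_quotient.
From mathcomp Require Import finmap monalg mpoly.
From Stdlib Require Import ClassicalEpsilon.

Set Implicit Arguments.
Unset Strict Implicit.
Unset Printing Implicit Defensive.

Import GRing.Theory.
Local Open Scope ring_scope.

Notation "{ 'mpoly' T [ n ] }" := (mpoly.mpoly n T) : type_scope.

Definition is_poisson_bracket (k : fieldType) (n : nat)
    (br : {mpoly k[n]} -> {mpoly k[n]} -> {mpoly k[n]}) : Prop :=
  [/\ forall (c : k) (p q r : {mpoly k[n]}), br (c *: p + q) r = c *: br p r + br q r,
      forall (c : k) (p q r : {mpoly k[n]}), br r (c *: p + q) = c *: br r p + br r q,
      forall p q : {mpoly k[n]}, br p q = - br q p,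
      forall p q r : {mpoly k[n]}, br p (br q r) + br q (br r p) + br r (br p q) = 0
    & forall p q r : {mpoly k[n]}, br p (q * r) = br p q * r + q * br p r].

Definition is_quadratic (k : fieldType) (n : nat)
    (br : {mpoly k[n]} -> {mpoly k[n]} -> {mpoly k[n]}) : Prop :=
  forall p q : {mpoly k[n]}, p \is 1.-homog -> q \is 1.-homog -> br p q \is 2.-homog.

Definition graded_poisson_aut (k : fieldType) (n : nat)
    (br : {mpoly k[n]} -> {mpoly k[n]} -> {mpoly k[n]})
    (phi : {mpoly k[n]} -> {mpoly k[n]}) : Prop :=
  [/\ bijective phi,
      forall d (p : {mpoly k[n]}), p \is d.-homog -> phi p \is d.-homog,
      [/\ forall p q : {mpoly k[n]}, phi (p + q) = phi p + phi q,
          forall (c : k) (p : {mpoly k[n]}), phi (c *: p) = c *: phi p,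
          forall p q : {mpoly k[n]}, phi (p * q) = phi p * phi q
        & phi 1 = 1]
    & forall p q : {mpoly k[n]}, phi (br p q) = br (phi p) (phi q)].

(* The free associative algebra on x_1..x_n (inl i), y_1..y_n (inr i): *)

Definition word (n : nat) := seq ('I_n + 'I_n)%type.
HB.instance Definition _ n := Choice.on (word n).

Lemma word_unitm n (x y : word n) : x ++ y = [::] -> x = [::] /\ y = [::].
Proof. by case: x => //; case: y. Qed.

HB.instance Definition _ n := monalg.Choice_isMonomialDef.Build (word n)
  (@catA _) (@cat0s _) (@cats0 _) (@word_unitm n).

Definition freealg (k : fieldType) (n : nat) := monalg.malg (word n) k.

Definition fX (k : fieldType) (n : nat) (i : 'I_n) : freealg k n :=
  monalg.mkmalgU ([:: inl i] : word n) 1.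
Definition fY (k : fieldType) (n : nat) (i : 'I_n) : freealg k n :=
  monalg.mkmalgU ([:: inr i] : word n) 1.

Definition fhomog (k : fieldType) (n : nat) (d : nat) (f : freealg k n) : Prop :=
  forall w : word n, w \in monalg.msupp f -> size w = d.

(* a polynomial f in the x's, viewed in the free algebra (in U(P) the x's
   commute, so the ordering of the variables is immaterial) *)
Definition fembed (k : fieldType) (n : nat) (f : {mpoly k[n]}) : freealg k n :=
  \sum_(m <- mpoly.msupp f)
     mpoly.mcoeff m f *: \prod_(i < n) fX k i ^+ (m i).

Definition UPrel (k : fieldType) (n : nat)
    (br : {mpoly k[n]} -> {mpoly k[n]} -> {mpoly k[n]})
    (c : 'I_3) (i j : 'I_n) : freealg k n :=
  let xij := br (mpoly.mpolyX _ (mpoly.mnm1 i)) (mpoly.mpolyX _ (mpoly.mnm1 j)) in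
  if val c == 0%N then fX k i * fX k j - fX k j * fX k i
  else if val c == 1%N then
    fY k i * fY k j - fY k j * fY k i
      - \sum_(l < n) fembed (mpoly.mderiv l xij) * fY k l
  else fY k i * fX k j - fX k j * fY k i - fembed xij.

Definition UPideal (k : fieldType) (n : nat)
    (br : {mpoly k[n]} -> {mpoly k[n]} -> {mpoly k[n]}) (f : freealg k n) : Prop :=
  exists s : seq (freealg k n * freealg k n * ('I_3 * 'I_n * 'I_n)),
    f = \sum_(t <- s) t.1.1 * UPrel br t.2.1.1 t.2.1.2 t.2.2 * t.1.2.

Definition pbool (P : Prop) : bool :=
  if excluded_middle_informative P then true else false.

Lemma pboolP (P : Prop) : reflect P (pbool P).
Proof. by rewrite /pbool; case: excluded_middle_informative => h; constructor. Qed.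

Definition UPeq (k : fieldType) (n : nat)
    (br : {mpoly k[n]} -> {mpoly k[n]} -> {mpoly k[n]}) : rel (freealg k n) :=
  fun f g => pbool (UPideal br (f - g)).

Lemma UPeq_refl k n br : reflexive (@UPeq k n br).
Proof.
move=> f; apply/pboolP; exists [::]; by rewrite subrr big_nil.
Qed.

Lemma UPeq_sym k n br : ssrbool.symmetric (@UPeq k n br).
Proof.
suff H : forall f g, @UPeq k n br f g -> UPeq br g f.
  by move=> f g; apply/idP/idP; apply: H.
move=> f g /pboolP [s hs]; apply/pboolP.
exists [seq ((- t.1.1, t.1.2), t.2) | t <- s].
rewrite big_map -[g - f]opprB hs -sumrN; apply: eq_bigr => t _ /=.
by rewrite !mulNr.
Qed.

Lemma UPeq_trans k n br : transitive (@UPeq k n br).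
Proof.
move=> g f h /pboolP [s hs] /pboolP [s' hs']; apply/pboolP; exists (s ++ s').
by rewrite big_cat /= -hs -hs' addrA subrK.
Qed.

Definition UPequiv (k : fieldType) (n : nat)
    (br : {mpoly k[n]} -> {mpoly k[n]} -> {mpoly k[n]}) : equiv_rel (freealg k n) :=
  EquivRel (@UPeq k n br) (@UPeq_refl k n br) (@UPeq_sym k n br)
    (@UPeq_trans k n br).

Definition UP (k : fieldType) (n : nat)
    (br : {mpoly k[n]} -> {mpoly k[n]} -> {mpoly k[n]}) :=
  {eq_quot (UPequiv br)}%qT.

Definition UPpi (k : fieldType) (n : nat)
    (br : {mpoly k[n]} -> {mpoly k[n]} -> {mpoly k[n]}) (f : freealg k n) : UP br := \pi_(UP br)%qT f.

Definition UPadd (k : fieldType) (n : nat)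
    (br : {mpoly k[n]} -> {mpoly k[n]} -> {mpoly k[n]}) (u v : UP br) : UP br := UPpi br (repr u + repr v)%qT.
Definition UPmul (k : fieldType) (n : nat)
    (br : {mpoly k[n]} -> {mpoly k[n]} -> {mpoly k[n]}) (u v : UP br) : UP br := UPpi br (repr u * repr v)%qT.
Definition UPscale (k : fieldType) (n : nat)
    (br : {mpoly k[n]} -> {mpoly k[n]} -> {mpoly k[n]}) (c : k) (u : UP br) : UP br := UPpi br (c *: repr u)%qT.
Definition UPone (k : fieldType) (n : nat)
    (br : {mpoly k[n]} -> {mpoly k[n]} -> {mpoly k[n]}) : UP br := UPpi br (1 : freealg k n).

Definition UPdeg (k : fieldType) (n : nat)
    (br : {mpoly k[n]} -> {mpoly k[n]} -> {mpoly k[n]}) (d : nat) (u : UP br) : Prop :=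
  exists f : freealg k n, fhomog d f /\ u = UPpi br f.

Definition UPalpha (k : fieldType) (n : nat)
    (br : {mpoly k[n]} -> {mpoly k[n]} -> {mpoly k[n]}) (f : {mpoly k[n]}) : UP br := UPpi br (fembed f).
Definition UPbeta (k : fieldType) (n : nat)
    (br : {mpoly k[n]} -> {mpoly k[n]} -> {mpoly k[n]}) (f : {mpoly k[n]}) : UP br :=
  UPpi br (\sum_(l < n) fembed (mpoly.mderiv l f) * fY k l).

Definition UPgraded_aut (k : fieldType) (n : nat)
    (br : {mpoly k[n]} -> {mpoly k[n]} -> {mpoly k[n]}) (psi : UP br -> UP br) : Prop :=
  [/\ bijective psi,
      forall d u, @UPdeg k n br d u -> @UPdeg k n br d (psi u)
    & [/\ forall u v, psi (UPadd u v) = UPadd (psi u) (psi v),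
          forall (c : k) u, psi (UPscale c u) = UPscale c (psi u),
          forall u v, psi (UPmul u v) = UPmul (psi u) (psi v)
        & psi (UPone br) = UPone br]].

(* Main.v *)
Require Import Defs.
From HB Require Import structures.
From mathcomp Require Import all_boot all_algebra.
From mathcomp Require Import generic_quotient finmap monalg mpoly.

Set Implicit Arguments.
Unset Strict Implicit.
Unset Printing Implicit Defensive.

Import GRing.Theory.
Local Open Scope ring_scope.




Section Ideal.
Variables (k : fieldType) (n : nat) (br : mpoly.mpoly n k -> mpoly.mpoly n k -> mpoly.mpoly n k).
Local Notation F := (freealg k n).
Local Notation I := (@UPideal k n br).

Lemma I0 : I 0.
Proof. by exists [::]; rewrite big_nil. Qed.

Lemma ID a b : I a -> I b -> I (a + b).
Proof. by move=> [s ->] [t ->]; exists (s ++ t); rewrite big_cat. Qed.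

Lemma IN a : I a -> I (- a).
Proof.
move=> [s ->]; exists [seq ((- t.1.1, t.1.2), t.2) | t <- s].
by rewrite big_map -sumrN; apply: eq_bigr => t _ /=; rewrite !mulNr.
Qed.

Lemma IMl c a : I a -> I (c * a).
Proof.
move=> [s ->]; exists [seq ((c * t.1.1, t.1.2), t.2) | t <- s].
by rewrite big_map mulr_sumr; apply: eq_bigr => t _ /=; rewrite !mulrA.
Qed.

Lemma IMr c a : I a -> I (a * c).
Proof.
move=> [s ->]; exists [seq ((t.1.1, t.1.2 * c), t.2) | t <- s].
by rewrite big_map mulr_suml; apply: eq_bigr => t _ /=; rewrite !mulrA.
Qed.

Lemma IZ (c : k) a : I a -> I (c *: a).
Proof. by move=> h; rewrite -mulr_algl; apply: IMl. Qed.

Lemma Irel c i j : I (UPrel br c i j).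
Proof.
by exists [:: ((1, 1), (c, i, j))]; rewrite big_seq1 /= mul1r mulr1.
Qed.

Lemma piP (a b : F) : UPpi br a = UPpi br b <-> I (a - b).
Proof.
split.
  by move=> h; apply/pboolP; apply/(@eqquotP _ _ (UP br)); exact h.
by move=> h; apply/(@eqquotP _ _ (UP br)); apply/pboolP.
Qed.

Lemma pi_repr (u : UP br) : UPpi br (repr u) = u.
Proof. exact: reprK. Qed.

Lemma Irepr a : I (repr (UPpi br a) - a).
Proof. by apply/piP; rewrite pi_repr. Qed.

End Ideal.
Lemma F_scalerAr (k : fieldType) (n : nat) (c : k) (g1 g2 : freealg k n) :
  c *: (g1 * g2) = g1 * (c *: g2).
Proof.
apply/malgP => w; rewrite monalg.mcoeffZ.
rewrite (mcoeffMlw _ (fsubset_refl _) (monalg.msuppZ_le c g2)) monalg.mcoeffMl.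
rewrite mulr_sumr; apply: eq_bigr => a _; rewrite mulr_sumr; apply: eq_bigr => b _.
by rewrite monalg.mcoeffZ mulrnAr mulrCA.
Qed.


Definition UPzero (k : fieldType) (n : nat) (br : mpoly.mpoly n k -> mpoly.mpoly n k -> mpoly.mpoly n k) : UP br :=
  UPpi br 0.
Definition UPopp (k : fieldType) (n : nat) (br : mpoly.mpoly n k -> mpoly.mpoly n k -> mpoly.mpoly n k) (u : UP br) : UP br :=
  UPpi br (- repr u)%qT.

Section UPops.
Variables (k : fieldType) (n : nat) (br : mpoly.mpoly n k -> mpoly.mpoly n k -> mpoly.mpoly n k).
Local Notation F := (freealg k n).
Local Notation pi := (UPpi br).

Lemma UPaddE (a b : F) : UPadd (pi a) (pi b) = pi (a + b).
Proof.
apply/piP; rewrite opprD addrACA; apply: ID; exact: Irepr.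
Qed.

Lemma UPmulE (a b : F) : UPmul (pi a) (pi b) = pi (a * b).
Proof.
apply/piP.
have -> : repr (pi a) * repr (pi b) - a * b =
   (repr (pi a) - a) * repr (pi b) + a * (repr (pi b) - b).
  by rewrite mulrBl mulrBr addrA subrK.
by apply: ID; [apply: IMr | apply: IMl]; apply: Irepr.
Qed.

Lemma UPscaleE c (a : F) : UPscale c (pi a) = pi (c *: a).
Proof. by apply/piP; rewrite -scalerBr; apply: IZ; apply: Irepr. Qed.

Lemma UPoppE (a : F) : UPopp (pi a) = pi (- a).
Proof. by apply/piP; rewrite opprK addrC -opprB; apply: IN; apply: Irepr. Qed.

Lemma UPind (P : UP br -> Prop) : (forall a, P (pi a)) -> forall u, P u.
Proof. by move=> h u; rewrite -[u]pi_repr; apply: h. Qed.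

Lemma UPaddA : associative (@UPadd k n br).
Proof.
by elim/UPind => a; elim/UPind => b; elim/UPind => c; rewrite !UPaddE addrA.
Qed.
Lemma UPaddC : commutative (@UPadd k n br).
Proof. by elim/UPind => a; elim/UPind => b; rewrite !UPaddE addrC. Qed.
Lemma UPadd0 : left_id (UPzero br) (@UPadd k n br).
Proof. by elim/UPind => a; rewrite UPaddE add0r. Qed.
Lemma UPaddN : left_inverse (UPzero br) (@UPopp k n br) (@UPadd k n br).
Proof. by elim/UPind => a; rewrite UPoppE UPaddE addNr. Qed.

Lemma UPscaleA c d u : UPscale c (UPscale d u) = UPscale (c * d) u :> UP br.
Proof. by elim/UPind: u => a; rewrite !UPscaleE scalerA. Qed.
Lemma UPscale1 u : UPscale 1 u = u :> UP br.
Proof. by elim/UPind: u => a; rewrite !UPscaleE scale1r. Qed.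
Lemma UPscaleDr c : {morph (@UPscale k n br c) : u v / UPadd u v}.
Proof.
by elim/UPind => a; elim/UPind => b; rewrite !(UPscaleE, UPaddE) scalerDr.
Qed.
Lemma UPscaleDl (u : UP br) : {morph (@UPscale k n br)^~ u : c d / c + d >-> UPadd c d}.
Proof. by elim/UPind: u => a c d; rewrite !(UPscaleE, UPaddE) scalerDl. Qed.

Lemma UPmulA : associative (@UPmul k n br).
Proof.
by elim/UPind => a; elim/UPind => b; elim/UPind => c; rewrite !UPmulE mulrA.
Qed.
Lemma UPmul1 : left_id (UPone br) (@UPmul k n br).
Proof. by elim/UPind => a; rewrite /UPone UPmulE mul1r. Qed.
Lemma UPmulr1 : right_id (UPone br) (@UPmul k n br).
Proof. by elim/UPind => a; rewrite /UPone UPmulE mulr1. Qed.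
Lemma UPmulDl : left_distributive (@UPmul k n br) (@UPadd k n br).
Proof.
by elim/UPind => a; elim/UPind => b; elim/UPind => c; rewrite !(UPmulE, UPaddE) mulrDl.
Qed.
Lemma UPmulDr : right_distributive (@UPmul k n br) (@UPadd k n br).
Proof.
by elim/UPind => a; elim/UPind => b; elim/UPind => c; rewrite !(UPmulE, UPaddE) mulrDr.
Qed.
Lemma UPscaleAl c (u v : UP br) : UPscale c (UPmul u v) = UPmul (UPscale c u) v.
Proof.
by elim/UPind: u => a; elim/UPind: v => b; rewrite !(UPmulE, UPscaleE) scalerAl.
Qed.
Lemma UPscaleAr c (u v : UP br) : UPscale c (UPmul u v) = UPmul u (UPscale c v).
Proof.
by elim/UPind: u => a; elim/UPind: v => b; rewrite !(UPmulE, UPscaleE) F_scalerAr.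
Qed.

End UPops.

Definition UPq (k : fieldType) (n : nat) (br : mpoly.mpoly n k -> mpoly.mpoly n k -> mpoly.mpoly n k)
  (h : UPone br <> UPzero br) := UP br.

Section UPqInst.
End UPqInst.

HB.instance Definition _ (k : fieldType) (n : nat) (br : mpoly.mpoly n k -> mpoly.mpoly n k -> mpoly.mpoly n k) h :=
  Choice.copy (@UPq k n br h) {eq_quot (UPequiv br)}%qT.
HB.instance Definition _ (k : fieldType) (n : nat) (br : mpoly.mpoly n k -> mpoly.mpoly n k -> mpoly.mpoly n k) h :=
  GRing.isZmodule.Build (@UPq k n br h) (@UPaddA k n br) (@UPaddC k n br) (@UPadd0 k n br) (@UPaddN k n br).
HB.instance Definition _ (k : fieldType) (n : nat) (br : mpoly.mpoly n k -> mpoly.mpoly n k -> mpoly.mpoly n k) h :=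
  GRing.Zmodule_isLmodule.Build k (@UPq k n br h) (@UPscaleA k n br) (@UPscale1 k n br) (@UPscaleDr k n br) (@UPscaleDl k n br).
Lemma UPq_one_neq0 (k : fieldType) (n : nat) (br : mpoly.mpoly n k -> mpoly.mpoly n k -> mpoly.mpoly n k) h :
  (UPone br : @UPq k n br h) != 0.
Proof. by apply/eqP. Qed.
HB.instance Definition _ (k : fieldType) (n : nat) (br : mpoly.mpoly n k -> mpoly.mpoly n k -> mpoly.mpoly n k) h :=
  GRing.Zmodule_isNzRing.Build (@UPq k n br h) (@UPmulA k n br) (@UPmul1 k n br) (@UPmulr1 k n br)
    (@UPmulDl k n br) (@UPmulDr k n br) (@UPq_one_neq0 k n br h).
HB.instance Definition _ (k : fieldType) (n : nat) (br : mpoly.mpoly n k -> mpoly.mpoly n k -> mpoly.mpoly n k) h :=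
  GRing.Lmodule_isLalgebra.Build k (@UPq k n br h) (@UPscaleAl k n br).
HB.instance Definition _ (k : fieldType) (n : nat) (br : mpoly.mpoly n k -> mpoly.mpoly n k -> mpoly.mpoly n k) h :=
  GRing.Lalgebra_isAlgebra.Build k (@UPq k n br h) (@UPscaleAr k n br).




Section NonTriv.
Variables (k : fieldType) (n : nat) (br : mpoly.mpoly n k -> mpoly.mpoly n k -> mpoly.mpoly n k).
Hypothesis hq : is_quadratic br.
Local Notation F := (freealg k n).
Local Notation eps := (@monalg.mcoeff (word n) k (@mone _)).

Lemma epsX i : eps (fX k i) = 0.
Proof. by rewrite /fX mcoeffU. Qed.
Lemma epsY i : eps (fY k i) = 0.
Proof. by rewrite /fY mcoeffU. Qed.

Lemma eps_fembed (p : mpoly.mpoly n k) : (forall m, m \in mpoly.msupp p -> mdeg m != 0%N) ->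
  eps (fembed p) = 0.
Proof.
move=> hp; rewrite /fembed raddf_sum /= big1_seq // => m /andP [_ hm].
rewrite linearZ /= rmorph_prod /=.
have [i /= hi] : exists i, m i != 0%N.
  apply/existsP; move: (hp m hm); apply: contraR; rewrite negb_exists => /forallP h.
  by rewrite mdegE big1 // => i _; apply/eqP; move: (h i); rewrite negbK.
rewrite (bigD1 i) //= rmorphXn /= epsX expr0n (negbTE hi) mul0r.
by rewrite mulr0.
Qed.

Lemma epsM (a b : F) : eps (a * b) = eps a * eps b.
Proof. exact: rmorphM. Qed.
Lemma epsB (a b : F) : eps (a - b) = eps a - eps b.
Proof. exact: rmorphB. Qed.
Lemma epsMM (a b c d : F) : eps (a * b - c * d) = eps a * eps b - eps c * eps d.
Proof. by rewrite epsB !epsM. Qed.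

Lemma eps_g0 (a b : F) : eps a = 0 -> eps (a * b - b * a) = 0.
Proof. by move=> ha; rewrite epsMM ha mul0r mulr0 subrr. Qed.
Lemma eps_g1 (a b : F) (e g : 'I_n -> F) : eps a = 0 -> (forall l, eps (g l) = 0) ->
  eps (a * b - b * a - \sum_(l < n) e l * g l) = 0.
Proof.
move=> ha hg; rewrite epsB eps_g0 // raddf_sum /= big1 ?subrr // => l _.
by rewrite epsM hg mulr0.
Qed.
Lemma eps_g2 (a b e : F) : eps a = 0 -> eps e = 0 -> eps (a * b - b * a - e) = 0.
Proof. by move=> ha he; rewrite epsB eps_g0 // he subrr. Qed.

Lemma eps_rel c i j : eps (UPrel br c i j) = 0.
Proof.
rewrite /UPrel; case: ifP => _; first exact/eps_g0/epsX.
case: ifP => _; first exact/eps_g1/epsY/epsY.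
apply/eps_g2; first exact: epsY.
apply: eps_fembed.
have h2 : br (mpoly.mpolyX k (mnm1 i)) (mpoly.mpolyX k (mnm1 j)) \is 2.-homog.
  by apply: hq; rewrite dhomogX /= mdeg1.
by move=> m /(dhomog_mf h2) ->.
Qed.

Lemma eps_ideal f : UPideal br f -> eps f = 0.
Proof.
move=> [s ->]; rewrite raddf_sum /= big1 // => t _.
by rewrite !epsM eps_rel mulr0 mul0r.
Qed.

Lemma UP_nontriv : UPone br <> UPzero br.
Proof.
move/piP; rewrite subr0 => /eps_ideal; rewrite rmorph1 => /eqP.
by rewrite oner_eq0.
Qed.
End NonTriv.


Fact gkey : unit. Proof. by []. Qed.
Definition gX (k : fieldType) (n : nat) : 'I_n -> freealg k n := locked_with gkey (@fX k n).
Definition gY (k : fieldType) (n : nat) : 'I_n -> freealg k n := locked_with gkey (@fY k n).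
Lemma gXE k n : @gX k n = @fX k n. Proof. exact: locked_withE. Qed.
Lemma gYE k n : @gY k n = @fY k n. Proof. exact: locked_withE. Qed.

Definition UPpiq (k : fieldType) (n : nat) (br : mpoly.mpoly n k -> mpoly.mpoly n k -> mpoly.mpoly n k)
  (h : UPone br <> UPzero br) (f : freealg k n) : UPq h := UPpi br f.

Lemma UPpiq_linear k n br h : linear (@UPpiq k n br h).
Proof.
move=> a u v; rewrite /UPpiq.
change (UPpi br (a *: u + v) = UPadd (UPscale a (UPpi br u)) (UPpi br v)).
by rewrite UPscaleE UPaddE.
Qed.
HB.instance Definition _ (k : fieldType) (n : nat) (br : mpoly.mpoly n k -> mpoly.mpoly n k -> mpoly.mpoly n k) (h : UPone br <> UPzero br) := GRing.isLinear.Build k (freealg k n) (UPq h) *:%R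
  (@UPpiq k n br h) (@UPpiq_linear k n br h).
Lemma UPpiq_mult k n br h : multiplicative (@UPpiq k n br h).
Proof.
split => [u v|] //; rewrite /UPpiq.
by change (UPpi br (u * v) = UPmul (UPpi br u) (UPpi br v)); rewrite UPmulE.
Qed.
HB.instance Definition _ (k : fieldType) (n : nat) (br : mpoly.mpoly n k -> mpoly.mpoly n k -> mpoly.mpoly n k) (h : UPone br <> UPzero br) := GRing.isMultiplicative.Build (freealg k n) (UPq h)
  (@UPpiq k n br h) (@UPpiq_mult k n br h).

Lemma prod_comm_split (R : ringType) m (a b : 'I_m -> R) :
  (forall i j, GRing.comm (a i) (b j)) ->
  \prod_(i < m) (a i * b i) = (\prod_(i < m) a i) * \prod_(i < m) b i.
Proof.
elim: m a b => [|m IH] a b hab; first by rewrite !big_ord0 mulr1.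
rewrite !big_ord_recr /= IH; last by move=> i j; apply: hab.
have hc : GRing.comm (\prod_(i < m) b (widen_ord (leqnSn m) i)) (a ord_max).
  by apply: commr_sym; apply: commr_prod => i _; apply: hab.
by rewrite -!mulrA; congr (_ * _); rewrite !mulrA hc.
Qed.

Section Qbasics.
Variables (k : fieldType) (n : nat) (br : mpoly.mpoly n k -> mpoly.mpoly n k -> mpoly.mpoly n k).
Hypothesis hq : is_quadratic br.
Local Notation F := (freealg k n).
Local Notation P := (mpoly.mpoly n k).
Let hnt := UP_nontriv hq.
Local Notation Q := (UPq hnt).
Local Notation pi := (@UPpiq k n br hnt).

Definition Xq (i : 'I_n) : Q := pi (gX k i).
Definition Yq (i : 'I_n) : Q := pi (gY k i).

Lemma pi_rel c i j : pi (UPrel br c i j) = 0.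
Proof. by apply/piP; rewrite subr0; apply: Irel. Qed.

Lemma pi_ideal f : UPideal br f -> pi f = 0.
Proof. by move=> hf; apply/piP; rewrite subr0. Qed.

Lemma rel0 i j : Xq i * Xq j = Xq j * Xq i.
Proof.
have := pi_rel (@Ordinal 3 0 isT) i j; rewrite /UPrel /= -(gXE k n).
by rewrite rmorphB !rmorphM /= => /eqP; rewrite subr_eq0 => /eqP.
Qed.

Definition alpha (p : P) : Q := mpoly.mmap (GRing.in_alg Q) Xq p.

Lemma fembedE (p : P) : fembed p = mpoly.mmap (GRing.in_alg F) (@fX k n) p.
Proof. by apply: eq_bigr => m _; rewrite /= mulr_algl. Qed.

Lemma alphaE (p : P) : pi (fembed p) = alpha p.
Proof.
rewrite fembedE /alpha /mpoly.mmap raddf_sum /=; apply: eq_bigr => m _.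
rewrite rmorphM /= rmorph_prod /= /mmap1 /Xq (gXE k n); congr (_ * _).
  by rewrite /= linearZ /= rmorph1.
by apply: eq_bigr => i _; rewrite rmorphXn.
Qed.


Lemma XqC i j : GRing.comm (Xq i) (Xq j).
Proof. exact: rel0. Qed.

Lemma mmap1D (m1 m2 : 'X_{1..n}) : mmap1 Xq (m1 + m2)%MM = mmap1 Xq m1 * mmap1 Xq m2.
Proof.
rewrite /mmap1 -prod_comm_split; last first.
  by move=> i j; apply: commr_sym; apply: commrX; apply: commr_sym; apply: commrX; apply: XqC.
by apply: eq_bigr => i _; rewrite mnmDE exprD.
Qed.

Lemma alphaD : {morph alpha : p q / p + q}.
Proof. exact: raddfD. Qed.
Lemma alphaB : {morph alpha : p q / p - q}.
Proof. exact: raddfB. Qed.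
Lemma alpha0 : alpha 0 = 0.
Proof. exact: raddf0. Qed.
Lemma alpha_sum (I : Type) (r : seq I) (Pr : pred I) (G : I -> P) :
  alpha (\sum_(i <- r | Pr i) G i) = \sum_(i <- r | Pr i) alpha (G i).
Proof. exact: raddf_sum. Qed.
Lemma alphaZ c p : alpha (c *: p) = c *: alpha p.
Proof. by rewrite /alpha mmapZ /= mulr_algl. Qed.
Lemma alphaC c : alpha c%:MP = c%:A.
Proof. by rewrite /alpha mmapC. Qed.
Lemma alpha1 : alpha 1 = 1.
Proof. by rewrite -mpolyC1 alphaC scale1r. Qed.
Lemma alphaXm m : alpha 'X_[m] = mmap1 Xq m.
Proof. by rewrite /alpha mmapX. Qed.
Lemma alphaX i : alpha 'X_i = Xq i.
Proof. by rewrite alphaXm mmap1U. Qed.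

Lemma alphaM p q : alpha (p * q) = alpha p * alpha q.
Proof.
rewrite mpolyME alpha_sum big_allpairs [in RHS](mpolyE p) [in RHS](mpolyE q).
rewrite !alpha_sum big_distrl /=; apply: eq_bigr => m1 _.
rewrite big_distrr /=; apply: eq_bigr => m2 _.
by rewrite !alphaZ !alphaXm mmap1D -scalerAl -scalerAr scalerA.
Qed.

Definition beta (p : P) : Q := \sum_(l < n) alpha (p^`M(l)) * Yq l.

Lemma betaE (p : P) : pi (\sum_(l < n) fembed (p^`M(l)) * fY k l) = beta p.
Proof.
rewrite rmorph_sum /beta /Yq (gYE k n); apply: eq_bigr => l _.
by rewrite rmorphM /= alphaE.
Qed.

Lemma betaD : {morph beta : p q / p + q}.
Proof.
move=> p q; rewrite /beta -big_split /=; apply: eq_bigr => l _.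
by rewrite mderivD alphaD mulrDl.
Qed.
Lemma betaZ c p : beta (c *: p) = c *: beta p.
Proof.
rewrite /beta scaler_sumr; apply: eq_bigr => l _.
by rewrite mderivZ alphaZ scalerAl.
Qed.

Lemma mderivXU (l i : 'I_n) : ('X_i : P)^`M(l) = ((i == l)%:R)%:MP.
Proof.
rewrite mderivX mnm1E; have [->|ne] := eqVneq i l.
  have -> : (U_(l) - U_(l))%MM = 0%MM by apply/mnmP => j; rewrite mnmBE subnn mnm0E.
  by rewrite mpolyX0 scale1r mpolyC1.
by rewrite scale0r mpolyC0.
Qed.

Lemma betaX i : beta 'X_i = Yq i.
Proof.
rewrite /beta (bigD1 i) //= big1 ?addr0 => [|l /negbTE hl].
  by rewrite mderivXU eqxx alphaC scale1r mul1r.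
by rewrite mderivXU eq_sym hl alphaC scale0r mul0r.
Qed.

Lemma rel1 i j : Yq i * Yq j - Yq j * Yq i = beta (br 'X_i 'X_j).
Proof.
have := pi_rel (@Ordinal 3 1 isT) i j; rewrite /UPrel /= -(gYE k n).
rewrite rmorphB /= rmorphB !rmorphM /= => /eqP; rewrite subr_eq0 => /eqP ->.
by rewrite (gYE k n) betaE.
Qed.

Lemma rel2 i j : Yq i * Xq j - Xq j * Yq i = alpha (br 'X_i 'X_j).
Proof.
have := pi_rel (@Ordinal 3 2 isT) i j; rewrite /UPrel /= -(gYE k n) -(gXE k n).
rewrite rmorphB /= rmorphB !rmorphM /= => /eqP; rewrite subr_eq0 => /eqP ->.
by rewrite alphaE.
Qed.


Definition Gen (a : 'I_n + 'I_n) : F := match a with inl i => fX k i | inr i => fY k i end.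

Lemma scaleU (c : k) (w : word n) : c *: (mkmalgU w 1 : F) = mkmalgU w c.
Proof.
by apply/malgP => w'; rewrite monalg.mcoeffZ !mcoeffU mulr_natr.
Qed.

Lemma wordE (w : word n) (c : k) : (mkmalgU w c : F) = c *: \prod_(a <- w) Gen a.
Proof.
elim: w c => [|a w IH] c.
  by rewrite big_nil -scaleU.
rewrite big_cons F_scalerAr -IH.
have -> : Gen a = mkmalgU [:: a] 1 by case: a.
by rewrite malgM_def fgmulUU mul1r.
Qed.

Definition UPhom (th : Q -> Q) :=
  [/\ forall u v, th (u + v) = th u + th v, forall c u, th (c *: u) = c *: th u,
      forall u v, th (u * v) = th u * th v & th 1 = 1].

Lemma UPhom_eq (t1 t2 : Q -> Q) : UPhom t1 -> UPhom t2 ->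
  (forall i, t1 (Xq i) = t2 (Xq i)) -> (forall i, t1 (Yq i) = t2 (Yq i)) ->
  forall u, t1 u = t2 u.
Proof.
move=> [D1 Z1 M1 O1] [D2 Z2 M2 O2] hX hY.
have z1 : t1 0 = 0 by apply: (@addrI _ (t1 0)); rewrite -D1 !addr0.
have z2 : t2 0 = 0 by apply: (@addrI _ (t2 0)); rewrite -D2 !addr0.
elim/UPind => f; change (t1 (pi f) = t2 (pi f)).
rewrite [f]monalgE rmorph_sum /=.
rewrite (big_morph t1 D1 z1) (big_morph t2 D2 z2); apply: eq_bigr => w _.
rewrite wordE linearZ /= Z1 Z2 rmorph_prod /=.
rewrite (big_morph t1 M1 O1) (big_morph t2 M2 O2); congr (_ *: _).
apply: eq_bigr => [[i|i]] _ /=.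
  by have := hX i; rewrite /Xq (gXE k n).
by have := hY i; rewrite /Yq (gYE k n).
Qed.

End Qbasics.


Section Poly.
Variables (k : fieldType) (n : nat).
Local Notation P := (mpoly.mpoly n k).

Lemma mpoly_closure (Pp : P -> Prop) : Pp 1 -> (forall i, Pp 'X_i) ->
  (forall p q, Pp p -> Pp q -> Pp (p + q)) -> (forall c p, Pp p -> Pp (c *: p)) ->
  (forall p q, Pp p -> Pp q -> Pp (p * q)) -> forall p, Pp p.
Proof.
move=> h1 hX hD hZ hM; elim/mpolyind => [|c m p _ _ hp].
  by rewrite -(scale0r (1 : P)); apply: hZ.
apply: hD => //; apply: hZ; rewrite mpolyXE_id.
apply: (big_ind Pp) => // i _; elim: (m i) => [|e IH]; first by rewrite expr0.
by rewrite exprS; apply: hM.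
Qed.

Lemma mcoeffXU_ (l : 'I_n) (m : 'X_{1..n}) : ('X_l : P)@_m = (U_(l)%MM == m)%:R.
Proof. by rewrite mcoeffX. Qed.

Lemma mnm1_inj (i j : 'I_n) : (U_(i)%MM == U_(j)%MM :> 'X_{1..n}) = (i == j).
Proof.
apply/eqP/eqP => [h|->] //; have := congr1 (fun m : 'X_{1..n} => m j) h.
by rewrite !mnm1E eqxx; case: eqP.
Qed.

Lemma homog1E (p : P) : p \is 1.-homog -> p = \sum_(l < n) p@_U_(l) *: 'X_l.
Proof.
move=> hp; apply/mpolyP => m; rewrite raddf_sum /=.
under eq_bigr do rewrite mcoeffZ mcoeffX.
have [/existsP [l /eqP ->]|] := boolP [exists l : 'I_n, m == U_(l)%MM].
  rewrite (bigD1 l) //= eqxx mulr1 big1 ?addr0 // => j /negbTE hj.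
  by rewrite mnm1_inj hj mulr0.
rewrite -mdeg_eq1 => hm; rewrite big1 => [|j _].
  apply: memN_msupp_eq0; apply: contra hm => hin.
  by rewrite (dhomog_mf hp hin).
case: eqP => [he|]; last by rewrite mulr0.
by move: hm; rewrite -he mdeg1.
Qed.
End Poly.

Section FH.
Variables (k : fieldType) (n : nat).
Local Notation F := (freealg k n).

Lemma fh0 d : fhomog d (0 : F).
Proof. by move=> w; rewrite monalg.msupp0. Qed.
Lemma fhD d (f g : F) : fhomog d f -> fhomog d g -> fhomog d (f + g).
Proof.
move=> hf hg w /(fsubsetP (monalg.msuppD_le f g)); rewrite in_fsetU => /orP [] h.
  exact: hf. exact: hg.
Qed.
Lemma fhZ d c (f : F) : fhomog d f -> fhomog d (c *: f).
Proof. by move=> hf w /(fsubsetP (monalg.msuppZ_le c f)); apply: hf. Qed.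
Lemma fhU (w : word n) c : fhomog (size w) (mkmalgU w c : F).
Proof. by move=> w' /(fsubsetP msuppU_le); rewrite in_fset1 => /eqP ->. Qed.
Lemma fh1 : fhomog 0 (1 : F).
Proof. exact: (@fhU [::] 1). Qed.
Lemma fhM d1 d2 (f g : F) : fhomog d1 f -> fhomog d2 g -> fhomog (d1 + d2) (f * g).
Proof.
move=> hf hg w /monalg.msuppM_le [w1 [w2 [h1 h2 ->]]].
by rewrite /= size_cat (hf _ h1) (hg _ h2).
Qed.
Lemma fh_sum d (I : eqType) (r : seq I) (G : I -> F) :
  (forall i, i \in r -> fhomog d (G i)) -> fhomog d (\sum_(i <- r) G i).
Proof.
move=> h; rewrite big_seq; apply: (big_ind (fhomog d)) => //.
- exact: fh0.
- by move=> x y; apply: fhD.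
Qed.
Lemma fhX i : fhomog 1 (fX k i : F).
Proof. exact: fhU. Qed.
Lemma fhY i : fhomog 1 (fY k i : F).
Proof. exact: fhU. Qed.
End FH.

Section Construct.
Variables (k : fieldType) (n : nat) (br : mpoly.mpoly n k -> mpoly.mpoly n k -> mpoly.mpoly n k).
Hypothesis hbr : is_poisson_bracket br.
Hypothesis hq : is_quadratic br.
Local Notation F := (freealg k n).
Local Notation P := (mpoly.mpoly n k).
Let hnt := UP_nontriv hq.
Local Notation Q := (UPq hnt).
Local Notation pi := (@UPpiq k n br hnt).
Local Notation Xq := (Xq hq).
Local Notation Yq := (Yq hq).
Local Notation alpha := (alpha hq).
Local Notation beta := (beta hq).

Variable phi : P -> P.
Hypothesis phiD : forall p q, phi (p + q) = phi p + phi q.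
Hypothesis phiZ : forall c p, phi (c *: p) = c *: phi p.
Hypothesis phiM : forall p q, phi (p * q) = phi p * phi q.
Hypothesis phi1 : phi 1 = 1.
Hypothesis phiB : forall p q, phi (br p q) = br (phi p) (phi q).
Hypothesis phiL : forall i, phi 'X_i \is 1.-homog.

Lemma phi0 : phi 0 = 0.
Proof. by have := phiZ 0 0; rewrite !scale0r. Qed.
Lemma phi_sum (I : Type) (r : seq I) (Pr : pred I) (G : I -> P) :
  phi (\sum_(i <- r | Pr i) G i) = \sum_(i <- r | Pr i) phi (G i).
Proof. exact: (big_morph phi phiD phi0). Qed.
Lemma phi_prod (I : Type) (r : seq I) (Pr : pred I) (G : I -> P) :
  phi (\prod_(i <- r | Pr i) G i) = \prod_(i <- r | Pr i) phi (G i).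
Proof. exact: (big_morph phi phiM phi1). Qed.
Lemma phiXn p e : phi (p ^+ e) = phi p ^+ e.
Proof. by elim: e => [|e IH]; rewrite ?expr0 ?phi1 // !exprS phiM IH. Qed.
Lemma phiC c : phi c%:MP = c%:MP.
Proof. by rewrite -alg_mpolyC phiZ phi1. Qed.

Definition a (i l : 'I_n) : k := (phi 'X_i)@_U_(l).

Lemma phiXE i : phi 'X_i = \sum_(l < n) a i l *: 'X_l.
Proof. exact: homog1E. Qed.

Lemma mderiv_phiX i r : (phi 'X_i)^`M(r) = (a i r)%:MP.
Proof.
rewrite phiXE raddf_sum /= (bigD1 r) //= big1 ?addr0 => [|l /negbTE hl].
  by rewrite mderivZ mderivXU eqxx mpolyC1 alg_mpolyC.
by rewrite mderivZ mderivXU hl mpolyC0 scaler0.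
Qed.

Lemma brDl p q r : br (p + q) r = br p r + br q r.
Proof. by case: hbr => h _ _ _ _; have := h 1 p q r; rewrite !scale1r. Qed.
Lemma brZl c p r : br (c *: p) r = c *: br p r.
Proof.
case: hbr => h _ _ _ _.
have h0 : br 0 r = 0.
  have := h 1 0 0 r; rewrite !scale1r addr0 => e.
  by apply: (@addrI _ (br 0 r)); rewrite addr0 -e.
by have := h c p 0 r; rewrite addr0 h0 addr0.
Qed.
Lemma brDr p q r : br r (p + q) = br r p + br r q.
Proof. by case: hbr => _ h _ _ _; have := h 1 p q r; rewrite !scale1r. Qed.
Lemma brZr c p r : br r (c *: p) = c *: br r p.
Proof.
case: hbr => _ h _ _ _.
have h0 : br r 0 = 0.
  have := h 1 0 0 r; rewrite !scale1r addr0 => e.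
  by apply: (@addrI _ (br r 0)); rewrite addr0 -e.
by have := h c p 0 r; rewrite addr0 h0 addr0.
Qed.
Lemma br0l r : br 0 r = 0.
Proof. by have := brZl 0 0 r; rewrite !scale0r. Qed.
Lemma br0r r : br r 0 = 0.
Proof. by have := brZr 0 0 r; rewrite !scale0r. Qed.
Lemma br_suml (I : Type) (s : seq I) (G : I -> P) r :
  br (\sum_(i <- s) G i) r = \sum_(i <- s) br (G i) r.
Proof. exact: (big_morph (br^~ r) (fun p q => brDl p q r) (br0l r)). Qed.
Lemma br_sumr (I : Type) (s : seq I) (G : I -> P) r :
  br r (\sum_(i <- s) G i) = \sum_(i <- s) br r (G i).
Proof. exact: (big_morph (br r) (fun p q => brDr p q r) (br0r r)). Qed.

Lemma chain r p : (phi p)^`M(r) = \sum_(l < n) a l r *: phi (p^`M(l)).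
Proof.
elim/mpoly_closure: p.
- rewrite phi1 -mpolyC1 mderivC big1 // => l _.
  by rewrite mderivC phi0 scaler0.
- move=> i; rewrite mderiv_phiX (bigD1 i) //= big1 ?addr0 => [|l /negbTE hl].
    by rewrite mderivXU eqxx phiC mpolyC1 alg_mpolyC.
  by rewrite mderivXU eq_sym hl phiC mpolyC0 scaler0.
- move=> p q hp hq'; rewrite phiD mderivD hp hq' -big_split /=.
  by apply: eq_bigr => l _; rewrite mderivD phiD scalerDr.
- move=> c p hp; rewrite phiZ mderivZ hp scaler_sumr; apply: eq_bigr => l _.
  by rewrite mderivZ phiZ !scalerA mulrC.
- move=> p q hp hq'; rewrite phiM mderivM hp hq' big_distrl big_distrr -big_split /=.
  apply: eq_bigr => l _; rewrite mderivM phiD !phiM scalerDr.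
  by rewrite -scalerAl -scalerAr.
Qed.


Lemma alpha_prod (I : Type) (r : seq I) (Pr : pred I) (G : I -> P) :
  alpha (\prod_(i <- r | Pr i) G i) = \prod_(i <- r | Pr i) alpha (G i).
Proof. exact: (big_morph alpha (alphaM hq) (alpha1 hq)). Qed.
Lemma alphaXn p e : alpha (p ^+ e) = alpha p ^+ e.
Proof. by elim: e => [|e IH]; rewrite ?expr0 ?alpha1 // !exprS alphaM IH. Qed.
Lemma beta0 : beta 0 = 0.
Proof. by have := betaZ hq 0 0; rewrite !scale0r. Qed.
Lemma beta_sum (I : Type) (r : seq I) (G : I -> P) :
  beta (\sum_(i <- r) G i) = \sum_(i <- r) beta (G i).
Proof. exact: (big_morph beta (betaD hq) beta0). Qed.

Lemma alpha_phiX i : alpha (phi 'X_i) = \sum_(l < n) a i l *: Xq l.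
Proof.
by rewrite phiXE alpha_sum; apply: eq_bigr => l _; rewrite alphaZ alphaX.
Qed.
Lemma beta_phiX i : beta (phi 'X_i) = \sum_(l < n) a i l *: Yq l.
Proof.
by rewrite phiXE beta_sum; apply: eq_bigr => l _; rewrite betaZ betaX.
Qed.

Definition lb (x y : Q) := x * y - y * x.

Lemma lb_sum (b c : 'I_n -> k) (U V : 'I_n -> Q) :
  lb (\sum_(l < n) b l *: U l) (\sum_(m < n) c m *: V m) =
  \sum_(l < n) \sum_(m < n) (b l * c m) *: lb (U l) (V m).
Proof.
rewrite /lb !big_distrlr /= [X in _ - X]exchange_big /= -sumrB.
apply: eq_bigr => l _; rewrite -sumrB; apply: eq_bigr => m _.
by rewrite scalerBr -!scalerAl -!scalerAr !scalerA [c m * b l]mulrC.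
Qed.

Definition genF (x : 'I_n + 'I_n) : F :=
  match x with
  | inl i => fembed (phi 'X_i)
  | inr i => \sum_(j < n) fembed ((phi 'X_i)^`M(j)) * fY k j
  end.
Definition hwF (w : word n) : F := \prod_(x <- w) genF x.

Lemma hwF_mm : monalg.mmorphism hwF.
Proof. by split => [w1 w2|]; rewrite /hwF ?big_nil // -big_cat. Qed.

HB.instance Definition _ := monalg.isMultiplicative.Build (word n) F hwF hwF_mm.

Local Notation PhiF := (monalg.mmap (GRing.in_alg F) hwF).

Lemma algF_comm (c : k) (x : F) : GRing.comm (c%:A) x.
Proof. by rewrite /GRing.comm mulr_algl -F_scalerAr mulr1. Qed.

Lemma PhiF_mult : multiplicative PhiF.
Proof.
apply: monalg.commr_mmap_is_multiplicative => g m m'; exact: algF_comm.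
Qed.
Lemma PhiFM f g : PhiF (f * g) = PhiF f * PhiF g.
Proof. exact: PhiF_mult.1. Qed.
Lemma PhiF1 : PhiF 1 = 1.
Proof. exact: PhiF_mult.2. Qed.
Lemma PhiFD f g : PhiF (f + g) = PhiF f + PhiF g.
Proof. exact: raddfD. Qed.
Lemma PhiF0 : PhiF 0 = 0.
Proof. exact: raddf0. Qed.
Lemma PhiFZ c f : PhiF (c *: f) = c *: PhiF f.
Proof. by rewrite monalg.mmapZ /= mulr_algl. Qed.

Definition Th (f : F) : Q := pi (PhiF f).

Lemma ThD f g : Th (f + g) = Th f + Th g.
Proof. by rewrite /Th PhiFD rmorphD. Qed.
Lemma Th0 : Th 0 = 0.
Proof. by rewrite /Th PhiF0 rmorph0. Qed.
Lemma ThZ c f : Th (c *: f) = c *: Th f.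
Proof. by rewrite /Th PhiFZ linearZ. Qed.
Lemma ThM f g : Th (f * g) = Th f * Th g.
Proof. by rewrite /Th PhiFM rmorphM. Qed.
Lemma Th1 : Th 1 = 1.
Proof. by rewrite /Th PhiF1 rmorph1. Qed.
Lemma ThB f g : Th (f - g) = Th f - Th g.
Proof.
have ThN x : Th (- x) = - Th x.
  by rewrite -scaleN1r ThZ scaleN1r.
by rewrite ThD ThN.
Qed.
Lemma Th_sum (I : Type) (r : seq I) (Pr : pred I) (G : I -> F) :
  Th (\sum_(i <- r | Pr i) G i) = \sum_(i <- r | Pr i) Th (G i).
Proof. exact: (big_morph Th ThD Th0). Qed.
Lemma Th_prod (I : Type) (r : seq I) (Pr : pred I) (G : I -> F) :
  Th (\prod_(i <- r | Pr i) G i) = \prod_(i <- r | Pr i) Th (G i).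
Proof. exact: (big_morph Th ThM Th1). Qed.
Lemma ThXn f e : Th (f ^+ e) = Th f ^+ e.
Proof. by elim: e => [|e IH]; rewrite ?expr0 ?Th1 // !exprS ThM IH. Qed.

Lemma PhiF_gen (x : 'I_n + 'I_n) : PhiF (mkmalgU [:: x] 1) = genF x.
Proof.
have -> : PhiF (mkmalgU [:: x] 1) = (GRing.in_alg F 1) * hwF [:: x] by exact: monalg.mmapU.
by rewrite /= scale1r mul1r /hwF big_cons big_nil mulr1.
Qed.

Lemma ThX i : Th (gX k i) = alpha (phi 'X_i).
Proof. by rewrite /Th (gXE k n) /fX PhiF_gen /= alphaE. Qed.
Lemma ThY i : Th (gY k i) = beta (phi 'X_i).
Proof. by rewrite /Th (gYE k n) /fY PhiF_gen /= betaE. Qed.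

Lemma alpha_phi p : Th (fembed p) = alpha (phi p).
Proof.
rewrite [in RHS](mpolyE p) phi_sum alpha_sum /fembed Th_sum.
apply: eq_bigr => m _; rewrite ThZ phiZ alphaZ mpolyXE_id phi_prod alpha_prod Th_prod.
congr (_ *: _); apply: eq_bigr => i _.
by rewrite ThXn phiXn alphaXn -(gXE k n) ThX.
Qed.

Lemma beta_phi p : Th (\sum_(l < n) fembed (p^`M(l)) * gY k l) = beta (phi p).
Proof.
rewrite Th_sum /beta.
under eq_bigr do rewrite ThM ThY alpha_phi /beta mulr_sumr.
rewrite exchange_big /=; apply: eq_bigr => r _.
rewrite chain alpha_sum big_distrl /=; apply: eq_bigr => l _.
by rewrite mderiv_phiX alphaC mulr_algl alphaZ -scalerAl -scalerAr.
Qed.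

Lemma Th_rel c i j : Th (UPrel br c i j) = 0.
Proof.
rewrite /UPrel; case: ifP => _.
  rewrite -(gXE k n) ThB !ThM !ThX -!alphaM -alphaB mulrC subrr.
  exact: alpha0.
case: ifP => _.
  rewrite -(gYE k n) !ThB !ThM !ThY beta_phi.
  have -> : beta (phi 'X_i) * beta (phi 'X_j) - beta (phi 'X_j) * beta (phi 'X_i)
      = lb (beta (phi 'X_i)) (beta (phi 'X_j)) by [].
  rewrite !beta_phiX lb_sum.
  under eq_bigr do under eq_bigr do rewrite /lb rel1 -betaZ.
  under eq_bigr do rewrite -beta_sum.
  rewrite -beta_sum phiB !phiXE br_suml; apply/eqP; rewrite subr_eq0; apply/eqP.
  congr beta; apply: eq_bigr => l _; rewrite brZl br_sumr scaler_sumr.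
  by apply: eq_bigr => m _; rewrite brZr scalerA.
rewrite -(gYE k n) -(gXE k n) !ThB !ThM ThY ThX alpha_phi.
have -> : beta (phi 'X_i) * alpha (phi 'X_j) - alpha (phi 'X_j) * beta (phi 'X_i)
    = lb (beta (phi 'X_i)) (alpha (phi 'X_j)) by [].
rewrite beta_phiX alpha_phiX lb_sum.
under eq_bigr do under eq_bigr do rewrite /lb rel2 -alphaZ.
under eq_bigr do rewrite -alpha_sum.
rewrite -alpha_sum phiB !phiXE br_suml; apply/eqP; rewrite subr_eq0; apply/eqP.
congr alpha; apply: eq_bigr => l _; rewrite brZl br_sumr scaler_sumr.
by apply: eq_bigr => m _; rewrite brZr scalerA.
Qed.

Lemma Th_ideal f : UPideal br f -> Th f = 0.
Proof.
move=> [s ->]; rewrite Th_sum big1 // => t _.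
by rewrite !ThM Th_rel mulr0 mul0r.
Qed.


Definition psi (u : UP br) : UP br := Th (repr u).

Lemma psiE f : psi (UPpi br f) = Th f.
Proof.
rewrite /psi; apply: (@subr0_eq Q); rewrite -ThB; apply: Th_ideal.
exact: Irepr.
Qed.

Lemma genF_h x : fhomog 1 (genF x).
Proof.
case: x => i /=.
  rewrite phiXE fembedE raddf_sum /=; apply: fh_sum => l _.
  rewrite mmapZ mmapX mmap1U /= mulr_algl; apply: fhZ; exact: fhX.
apply: fh_sum => j _; rewrite mderiv_phiX fembedE mmapC /=.
rewrite -[1%N]/(0 + 1)%N; apply: fhM; last exact: fhY.
by apply: fhZ; exact: fh1.
Qed.

Lemma hwF_h w : fhomog (size w) (hwF w).
Proof.
elim: w => [|x w IH]; first by rewrite /hwF big_nil; exact: fh1.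
by rewrite /hwF big_cons /= -add1n; apply: fhM => //; apply: genF_h.
Qed.

Lemma PhiF_h d f : fhomog d f -> fhomog d (PhiF f).
Proof.
move=> hf; rewrite monalg.mmapE; apply: fh_sum => w hw.
by rewrite /= mulr_algl; apply: fhZ; rewrite -(hf w hw); apply: hwF_h.
Qed.

Lemma construct : exists ps : UP br -> UP br,
  [/\ [/\ forall u v, ps (UPadd u v) = UPadd (ps u) (ps v),
          forall (c : k) u, ps (UPscale c u) = UPscale c (ps u),
          forall u v, ps (UPmul u v) = UPmul (ps u) (ps v)
        & ps (UPone br) = UPone br],
      forall d u, UPdeg d u -> UPdeg d (ps u),
      forall f, UPalpha br (phi f) = ps (UPalpha br f),
      forall f, UPbeta br (phi f) = ps (UPbeta br f)
    & forall i : 'I_n, ps (UPpi br (fX k i)) = UPalpha br (phi 'X_i)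
          /\ ps (UPpi br (fY k i)) =
               UPpi br (\sum_(j < n) fembed (mpoly.mderiv j (phi 'X_i)) * fY k j)].
Proof.
exists psi; split.
- split.
  + elim/UPind => x; elim/UPind => y.
    by rewrite UPaddE psiE [psi (UPpi br x)]psiE [psi (UPpi br y)]psiE ThD.
  + move=> c; elim/UPind => x.
    by rewrite UPscaleE psiE [psi (UPpi br x)]psiE ThZ.
  + elim/UPind => x; elim/UPind => y.
    by rewrite UPmulE psiE [psi (UPpi br x)]psiE [psi (UPpi br y)]psiE ThM.
  + by rewrite /UPone psiE Th1.
- move=> d u [f [hf ->]]; exists (PhiF f); split; first exact: PhiF_h.
  by rewrite psiE.
- by move=> f; rewrite /UPalpha psiE alpha_phi -alphaE.
- move=> f; rewrite /UPbeta psiE -(gYE k n) beta_phi (gYE k n) -betaE //.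
- move=> i; split.
    by rewrite psiE -(gXE k n) ThX -alphaE.
  by rewrite psiE /Th /fY PhiF_gen.
Qed.
End Construct.


Section LinInv.
Variables (k : fieldType) (n : nat).
Local Notation P := (mpoly.mpoly n k).
Variable phi : P -> P.
Hypothesis phiD : forall p q, phi (p + q) = phi p + phi q.
Hypothesis phiZ : forall c p, phi (c *: p) = c *: phi p.
Hypothesis phi_inj : injective phi.
Variable a : 'I_n -> 'I_n -> k.
Hypothesis hX : forall i, phi 'X_i = \sum_(l < n) a i l *: 'X_l.

Let phi0 : phi 0 = 0.
Proof. by have := phiZ 0 0; rewrite !scale0r. Qed.
Let phi_sum (I : Type) (r : seq I) (G : I -> P) :
  phi (\sum_(i <- r) G i) = \sum_(i <- r) phi (G i).
Proof. exact: (big_morph phi phiD phi0). Qed.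

Let phi_comb (v : 'I_n -> k) :
  phi (\sum_(i < n) v i *: 'X_i) = \sum_(l < n) (\sum_(i < n) v i * a i l) *: 'X_l.
Proof.
rewrite phi_sum; under eq_bigr do rewrite phiZ hX scaler_sumr.
rewrite exchange_big /=; apply: eq_bigr => l _; rewrite scaler_suml.
by apply: eq_bigr => i _; rewrite scalerA.
Qed.

Let coefX (v : 'I_n -> k) j : (\sum_(i < n) v i *: ('X_i : P))@_U_(j) = v j.
Proof.
rewrite raddf_sum /= (bigD1 j) //= big1 ?addr0 => [|i /negbTE hi].
  by rewrite mcoeffZ mcoeffXU eqxx mulr1.
by rewrite mcoeffZ mcoeffXU hi mulr0.
Qed.

Lemma lin_inv i : exists h : P, h \is 1.-homog /\ phi h = 'X_i.
Proof.
pose A : 'M[k]_n := \matrix_(i, l) a i l.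
have hA : A \in unitmx.
  rewrite -row_free_unit; apply: inj_row_free => v hv.
  have hq : \sum_(i < n) v 0 i *: ('X_i : P) = 0.
    apply: phi_inj; rewrite phi0 phi_comb big1 // => l _.
    have e0 : (0 : 'rV[k]_n) 0 l = 0 by rewrite mxE.
    have := congr1 (fun M : 'rV_n => M 0 l) hv; rewrite /= mxE e0.
    move=> h; have -> : \sum_(j < n) v 0 j * a j l = 0 by apply: (etrans _ h); apply: eq_bigr => j _; rewrite mxE.
    by rewrite scale0r.
  by apply/rowP => j; rewrite mxE -(coefX (v 0) j) hq mcoeff0.
pose B := invmx A.
exists (\sum_(j < n) B i j *: 'X_j); split.
  apply: rpred_sum => j _; apply: rpredZ; by rewrite dhomogX /= mdeg1.
rewrite phi_comb (bigD1 i) //= [X in _ + X]big1 ?addr0 => [|l /negbTE hl].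
  have := congr1 (fun M : 'M_n => M i i) (mulVmx hA); rewrite !mxE eqxx /=.
  by rewrite /A; under eq_bigr do rewrite mxE; move=> ->; rewrite scale1r.
have := congr1 (fun M : 'M_n => M i l) (mulVmx hA); rewrite !mxE eq_sym hl /=.
by rewrite /A; under eq_bigr do rewrite mxE; move=> ->; rewrite scale0r.
Qed.
End LinInv.

Section Main.
Variables (k : fieldType) (n : nat) (br : mpoly.mpoly n k -> mpoly.mpoly n k -> mpoly.mpoly n k).
Hypothesis hbr : is_poisson_bracket br.
Hypothesis hq : is_quadratic br.
Local Notation P := (mpoly.mpoly n k).
Let hnt := UP_nontriv hq.
Local Notation Q := (UPq hnt).

Lemma XqA i : UPalpha br 'X_i = Xq hq i.
Proof. by rewrite -(alphaX hq) -(alphaE hq). Qed.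
Lemma YqB i : UPbeta br 'X_i = Yq hq i.
Proof. by rewrite -(betaX hq) -(betaE hq). Qed.

Definition UPhomP (th : UP br -> UP br) :=
  [/\ forall u v, th (UPadd u v) = UPadd (th u) (th v),
      forall (c : k) u, th (UPscale c u) = UPscale c (th u),
      forall u v, th (UPmul u v) = UPmul (th u) (th v)
    & th (UPone br) = UPone br].

Lemma UPhomP_hom th : UPhomP th -> @UPhom k n br hq th.
Proof. by case=> hD hZ hM h1; split. Qed.

Lemma UPhomP_comp t1 t2 : UPhomP t1 -> UPhomP t2 -> UPhomP (t1 \o t2).
Proof.
case=> D1 Z1 M1 O1 [D2 Z2 M2 O2]; split => /=.
- by move=> u v; rewrite D2 D1.
- by move=> c u; rewrite Z2 Z1.
- by move=> u v; rewrite M2 M1.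
- by rewrite O2 O1.
Qed.

Lemma UPhomP_id : UPhomP id.
Proof. by []. Qed.

Lemma hom_eq_gen (t1 t2 : UP br -> UP br) : UPhomP t1 -> UPhomP t2 ->
  (forall i, t1 (UPalpha br 'X_i) = t2 (UPalpha br 'X_i)) ->
  (forall i, t1 (UPbeta br 'X_i) = t2 (UPbeta br 'X_i)) ->
  forall u, t1 u = t2 u.
Proof.
move=> h1 h2 hA hB; apply: (UPhom_eq (UPhomP_hom h1) (UPhomP_hom h2)) => i.
  by rewrite -XqA.
by rewrite -YqB.
Qed.

Lemma gpa_props (phi : P -> P) : graded_poisson_aut br phi ->
  [/\ forall p q, phi (p + q) = phi p + phi q,
      forall c p, phi (c *: p) = c *: phi p,
      forall p q, phi (p * q) = phi p * phi q,
      phi 1 = 1 &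
      forall p q, phi (br p q) = br (phi p) (phi q)].
Proof. by case=> _ _ [hD hZ hM h1] hB. Qed.

End Main.


Theorem lemma2p3 (k : closedFieldType) (n : nat)
    (br : mpoly.mpoly n k -> mpoly.mpoly n k -> mpoly.mpoly n k)
    (phi : mpoly.mpoly n k -> mpoly.mpoly n k) :
  [pchar k] =i pred0 ->
  is_poisson_bracket br ->
  is_quadratic br ->
  graded_poisson_aut br phi ->
  exists psi : UP br -> UP br,
    [/\ UPgraded_aut psi,
        forall f : mpoly.mpoly n k, UPalpha br (phi f) = psi (UPalpha br f),
        forall f : mpoly.mpoly n k, UPbeta br (phi f) = psi (UPbeta br f),
        (forall i : 'I_n, psi (UPpi br (fX k i)) = UPalpha br (phi 'X_i)
          /\ psi (UPpi br (fY k i)) =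
               UPpi br (\sum_(j < n) fembed (mpoly.mderiv j (phi 'X_i)) * fY k j))
      & forall psi' : UP br -> UP br,
          UPgraded_aut psi' ->
          (forall f : mpoly.mpoly n k, UPalpha br (phi f) = psi' (UPalpha br f)) ->
          (forall f : mpoly.mpoly n k, UPbeta br (phi f) = psi' (UPbeta br f)) ->
          forall u : UP br, psi' u = psi u].
Proof.
move=> _ hbr hq hphi.
have [hD hZ hM h1 hB] := gpa_props hphi.
case: hphi => [[g gK Kg] hdeg _ _].
have phiL : forall i, phi 'X_i \is 1.-homog.
  by move=> i; apply: hdeg; rewrite dhomogX /= mdeg1.
have phi_inj := can_inj gK.
have gD : forall p q, g (p + q) = g p + g q.
  by move=> p q; apply: phi_inj; rewrite hD !Kg.
have gZ : forall c p, g (c *: p) = c *: g p.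
  by move=> c p; apply: phi_inj; rewrite hZ !Kg.
have gM : forall p q, g (p * q) = g p * g q.
  by move=> p q; apply: phi_inj; rewrite hM !Kg.
have g1 : g 1 = 1 by apply: phi_inj; rewrite h1 Kg.
have gB : forall p q, g (br p q) = br (g p) (g q).
  by move=> p q; apply: phi_inj; rewrite hB !Kg.
have gL : forall i, g 'X_i \is 1.-homog.
  move=> i; have [h [hh ph]] := lin_inv hD hZ phi_inj (fun i => homog1E (phiL i)) i.
  by rewrite -ph gK.
have [ps [hom hdps hA hBe hgen]] := construct hbr hq hD hZ hM h1 hB phiL.
have [pg [homg _ hAg hBg _]] := construct hbr hq gD gZ gM g1 gB gL.
exists ps; split => //.
- split => //; exists pg.
  + apply: (hom_eq_gen hq (UPhomP_comp homg hom) (@UPhomP_id _ _ br)) => i /=.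
      by rewrite -hA -hAg gK.
    by rewrite -hBe -hBg gK.
  + apply: (hom_eq_gen hq (UPhomP_comp hom homg) (@UPhomP_id _ _ br)) => i /=.
      by rewrite -hAg -hA Kg.
    by rewrite -hBg -hBe Kg.
- move=> psi' [_ _ hom'] hA' hB' u.
  apply: (hom_eq_gen hq hom' hom) => i.
    by rewrite -hA' hA.
  by rewrite -hB' hBe.
Qed.
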